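(* Let $x$ be a positive integer relatively prime to $3$. Then every element $(x_0,x_1,x_2,\dots)\in\widetilde{\mathcal{I}}_x$ has some term $x_i$ with $x_i\equiv 2\pmod 9$.
   Context: Let $T(z)=z/2$ for $z$ even and $T(z)=(3z+1)/2$ for $z$ odd. For a positive integer $x$ not divisible by $3$, $\widetilde{\mathcal{I}}_x$ is the set of infinite sequences $(x_0,x_1,x_2,\dots)$ of positive integers not divisible by $3$ such that $x_0=x$ and $T(x_{i+1})=x_i$ for all $i\ge 0$. *)

(* Defs.v *)
From mathcomp Require Import all_boot.
Set Implicit Arguments. Unset Strict Implicit. Unset Printing Implicit Defensive.

Definition T (z : nat) : nat := if odd z then (3 * z + 1)./2 else z./2.

(* The set \tilde I_x of infinite backward T-orbits of x avoiding multiples of 3: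
   sequences s with s 0 = x, every s i positive and not divisible by 3,
   and T (s (i+1)) = s i. *)
Definition in_Itilde (x : nat) (s : nat -> nat) : Prop :=
  s 0 = x /\
  (forall i, 0 < s i /\ ~~ (3 %| s i)) /\
  (forall i, T (s i.+1) = s i).

(* Main.v *)
Require Import Defs.
From mathcomp Require Import all_boot.
From mathcomp Require Import zify.

Lemma T_step a b : T b = a -> b = 2 * a \/ 3 * b + 1 = 2 * a.
Proof.
rewrite /T; case ob: (odd b) => <-.
- right. have h := odd_double_half (3 * b + 1).
  have e : odd (3 * b + 1) = false by rewrite oddD oddM ob.
  rewrite e /= in h. rewrite -muln2 in h. lia.
- left. have h := odd_double_half b. rewrite ob /= -muln2 in h. lia.
Qed.

Theorem mainTheorem11 (x : nat) (hx : 0 < x) (hx3 : coprime x 3)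
  (s : nat -> nat) (hs : in_Itilde x s) :
  exists i, s i = 2 %[mod 9].
Proof.
case: hs => _ [hp hT].
have st : forall i, s i.+1 = 2 * s i \/ 3 * s i.+1 + 1 = 2 * s i.
  by move=> i; apply: T_step; apply: hT.
have n3 : forall i, ~~ (3 %| s i) by move=> i; case: (hp i).
have L1 : forall i, s i %% 9 = 1 -> exists j, s j = 2 %[mod 9].
  move=> i h; exists i.+1; have := n3 i.+1; case: (st i); lia.
have L5 : forall i, s i %% 9 = 5 -> exists j, s j = 2 %[mod 9].
  move=> i h; have := n3 i.+1; case: (st i) => e n.
  - apply: (L1 i.+1); lia.
  - lia.
have L7 : forall i, s i %% 9 = 7 -> exists j, s j = 2 %[mod 9].
  move=> i h; case: (st i) => e.
  - apply: (L5 i.+1); lia.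
  - lia.
have L8 : forall n i, s i < n -> s i %% 9 = 8 -> exists j, s j = 2 %[mod 9].
  elim=> [|n IH] i hn h; first lia.
  have := n3 i.+1; have := hp i; case: (st i) => e n1 hpi.
  - apply: (L7 i.+1); lia.
  - have : s i.+1 %% 9 = 2 \/ s i.+1 %% 9 = 5 \/ s i.+1 %% 9 = 8 by lia.
    case=> [h2|[h5|h8]].
    + by exists i.+1; rewrite h2.
    + exact: (L5 i.+1).
    + apply: (IH i.+1) => //; lia.
have := n3 0; have := hp 0 => _ n0.
have : s 0 %% 9 = 1 \/ s 0 %% 9 = 2 \/ s 0 %% 9 = 4 \/ s 0 %% 9 = 5 \/
       s 0 %% 9 = 7 \/ s 0 %% 9 = 8 by lia.
case=> [h|[h|[h|[h|[h|h]]]]].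
- exact: (L1 0).
- by exists 0; rewrite h.
- case: (st 0) => e.
  + apply: (L8 (s 1).+1 1) => //; lia.
  + lia.
- exact: (L5 0).
- exact: (L7 0).
- exact: (L8 (s 0).+1 0).
Qed.
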